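(* Let $R$ be a commutative ring, $S$ a multiplicative subset of $R$, and $f:M\to N$ an $R$-homomorphism between $u$-$S$-coherent $R$-modules $M$ and $N$. Then $\mathrm{Ker}(f)$, $\mathrm{Im}(f)$ and $\mathrm{Coker}(f)$ are $u$-$S$-coherent.
   Context: A multiplicative subset $S$ contains $1$ and is closed under products. $M$ is $S$-finite with respect to $s\in S$ if there is a finitely generated submodule $F\subseteq M$ with $sM\subseteq F$. $M$ is $u$-$S$-finitely presented with respect to $s$ if there is an exact sequence $0\to T_1\to F\to M\to T_2\to 0$ with $F$ finitely presented and $sT_1=sT_2=0$. $M$ is $u$-$S$-coherent if there is $s\in S$ such that $M$ is $S$-finite with respect to $s$ and every finitely generated submodule of $M$ is $u$-$S$-finitely presented with respect to $s$. *)

(* Defs.v *)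
From HB Require Import structures.
From mathcomp Require Import all_boot all_order all_algebra.

Set Implicit Arguments.
Unset Strict Implicit.
Unset Printing Implicit Defensive.

Import GRing.Theory.
Local Open Scope ring_scope.

Section UScoherent.
Variable R : comPzRingType.

Definition multiplicative_subset (S : {pred R}) : Prop :=
  1 \in S /\ forall a b, a \in S -> b \in S -> a * b \in S.

Definition span_of (M : lmodType R) (g : seq M) (x : M) : Prop :=
  exists c : 'I_(size g) -> R, x = \sum_(i < size g) c i *: g`_i.

Definition fin_presented (M : lmodType R) : Prop :=
  exists g : seq M,
    (forall x : M, span_of g x) /\
    exists rel : seq 'rV[R]_(size g),
      forall c : 'rV[R]_(size g),
        (\sum_(i < size g) c 0 i *: g`_i = 0) <-> span_of rel c.

Definition S_finite_wrt (M : lmodType R) (s : R) : Prop :=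
  exists g : seq M, forall x : M, span_of g (s *: x).

Definition uS_fin_presented_wrt (M : lmodType R) (s : R) : Prop :=
  exists (T1 F T2 : lmodType R)
         (i : {linear T1 -> F}) (phi : {linear F -> M}) (p : {linear M -> T2}),
    fin_presented F /\
    injective i /\
    (forall y : F, (exists x, i x = y) <-> phi y = 0) /\
    (forall m : M, (exists y, phi y = m) <-> p m = 0) /\
    (forall t : T2, exists m, p m = t) /\
    (forall t : T1, s *: t = 0) /\
    (forall t : T2, s *: t = 0).

Definition is_submodule_copy (M K : lmodType R) (j : {linear K -> M})
    (P : M -> Prop) : Prop :=
  injective j /\ forall m : M, (exists k, j k = m) <-> P m.

(* A finitely generated submodule span_of g is represented by any module K
   embedded in M with image span_of g. *)
Definition uS_coherent (S : {pred R}) (M : lmodType R) : Prop :=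
  exists2 s, s \in S &
    S_finite_wrt M s /\
    forall (g : seq M) (K : lmodType R) (j : {linear K -> M}),
      is_submodule_copy j (span_of g) -> uS_fin_presented_wrt K s.

End UScoherent.

(* Main.v *)
From HB Require Import structures.
From mathcomp Require Import all_boot all_order all_algebra.
From mathcomp Require Import boolp.
Require Import Defs.
Set Implicit Arguments. Unset Strict Implicit. Unset Printing Implicit Defensive.
Import GRing.Theory.
Local Open Scope ring_scope.

Definition subclosed (R : comPzRingType) (M : lmodType R) (P : M -> Prop) :=
  P 0 /\ forall a x y, P x -> P y -> P (a *: x + y).

Record submT (R : comPzRingType) (M : lmodType R) (P : M -> Prop) (h : subclosed P) :=
  SubM { sv : M ; sp : P sv }.
Arguments SubM {R M P h}.
Arguments sv {R M P h}.
Arguments sp {R M P h}.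

Section SubMod.
Variables (R : comPzRingType) (M : lmodType R) (P : M -> Prop) (h : subclosed P).
Local Notation submT := (submT h).

Lemma sv_inj : injective (@sv R M P h).
Proof.
case=> x px [y py] /= e; subst y; congr SubM; exact: Prop_irrelevance.
Qed.

HB.instance Definition _ := gen_eqMixin submT.
HB.instance Definition _ := gen_choiceMixin submT.

Lemma P0 : P 0. Proof. by case: h. Qed.
Lemma PD x y : P x -> P y -> P (x + y).
Proof. by move=> px py; have := (proj2 h) 1 x y px py; rewrite scale1r. Qed.
Lemma PZ a x : P x -> P (a *: x).
Proof. by move=> px; have := (proj2 h) a x 0 px P0; rewrite addr0. Qed.
Lemma PN x : P x -> P (- x).
Proof. by move=> px; rewrite -scaleN1r; apply: PZ. Qed.

Definition s0 : submT := SubM 0 P0.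
Definition sadd (x y : submT) : submT := SubM _ (PD (sp x) (sp y)).
Definition sopp (x : submT) : submT := SubM _ (PN (sp x)).
Definition sscale a (x : submT) : submT := SubM _ (PZ a (sp x)).

Lemma saddA : associative sadd.
Proof. by move=> x y z; apply: sv_inj; rewrite /= addrA. Qed.
Lemma saddC : commutative sadd.
Proof. by move=> x y; apply: sv_inj; rewrite /= addrC. Qed.
Lemma sadd0 : left_id s0 sadd.
Proof. by move=> x; apply: sv_inj; rewrite /= add0r. Qed.
Lemma saddN : left_inverse s0 sopp sadd.
Proof. by move=> x; apply: sv_inj; rewrite /= addNr. Qed.

HB.instance Definition _ := GRing.isZmodule.Build submT saddA saddC sadd0 saddN.

Lemma sscaleA a b v : sscale a (sscale b v) = sscale (a * b) v.
Proof. by apply: sv_inj; rewrite /= scalerA. Qed.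
Lemma sscale1 : left_id 1 sscale.
Proof. by move=> x; apply: sv_inj; rewrite /= scale1r. Qed.
Lemma sscaleDr : right_distributive sscale +%R.
Proof. by move=> a x y; apply: sv_inj; rewrite /= scalerDr. Qed.
Lemma sscaleDl v : {morph sscale^~ v: a b / a + b}.
Proof. by move=> a b; apply: sv_inj; rewrite /= scalerDl. Qed.

HB.instance Definition _ := GRing.Zmodule_isLmodule.Build R submT sscaleA sscale1 sscaleDr sscaleDl.

Lemma sv_lin : linear (@sv R M P h).
Proof. by []. Qed.
HB.instance Definition _ := GRing.isLinear.Build R submT M _ (@sv R M P h) sv_lin.

Lemma sub_copy : is_submodule_copy (@sv R M P h : {linear submT -> M}) P.
Proof.
split; first exact: sv_inj.
by move=> m; split; [case=> [[x px]] /= <- | move=> pm; exists (SubM m pm)].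
Qed.
End SubMod.

Record quoT (R : comPzRingType) (M : lmodType R) (P : M -> Prop) (h : subclosed P) :=
  QuoM { qs : M -> Prop ; qp : exists x, qs = fun y => P (y - x) }.
Arguments QuoM {R M P h}.
Arguments qs {R M P h}.
Arguments qp {R M P h}.

Section QuoMod.
Variables (R : comPzRingType) (M : lmodType R) (P : M -> Prop) (h : subclosed P).
Local Notation quoT := (quoT h).

Lemma qs_inj : injective (@qs R M P h).
Proof.
case=> x px [y py] /= e; subst y; congr QuoM; exact: Prop_irrelevance.
Qed.

HB.instance Definition _ := gen_eqMixin quoT.
HB.instance Definition _ := gen_choiceMixin quoT.

Definition cls (x : M) : quoT := QuoM (fun y => P (y - x)) (ex_intro _ x erefl).
Definition rep (A : quoT) : M := projT1 (cid (qp A)).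

Lemma clsP x y : cls x = cls y <-> P (x - y).
Proof.
split=> [e|pxy].
  have := congr1 qs e => /= /(congr1 (fun f => f x)); rewrite subrr => <-.
  exact: P0 h.
apply: qs_inj => /=; apply: funext => z; apply: propext; split => pz.
  by have := PD h pz pxy; rewrite addrA subrK.
have := PD h pz (PN h pxy); rewrite opprB addrA subrK; done.
Qed.

Lemma repK A : cls (rep A) = A.
Proof.
rewrite /rep; case: (cid _) => x /= e; apply: qs_inj => /=; by rewrite e.
Qed.

Lemma quo_ex A : exists x, A = cls x.
Proof. by exists (rep A); rewrite repK. Qed.

Lemma rep_cls x : P (rep (cls x) - x).
Proof. by apply/clsP; rewrite repK. Qed.

Definition q0 := cls 0.
Definition qadd A B := cls (rep A + rep B).
Definition qopp A := cls (- rep A).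
Definition qscale a A := cls (a *: rep A).

Lemma qaddE x y : qadd (cls x) (cls y) = cls (x + y).
Proof.
apply/clsP; rewrite opprD addrACA; apply: (PD h); exact: rep_cls.
Qed.
Lemma qoppE x : qopp (cls x) = cls (- x).
Proof. by apply/clsP; rewrite -opprD; apply: (PN h); exact: rep_cls. Qed.
Lemma qscaleE a x : qscale a (cls x) = cls (a *: x).
Proof. by apply/clsP; rewrite -scalerBr; apply: (PZ h); exact: rep_cls. Qed.

Lemma qaddA : associative qadd.
Proof.
move=> A B C; case: (quo_ex A) (quo_ex B) (quo_ex C) => x -> [y ->] [z ->].
by rewrite !qaddE addrA.
Qed.
Lemma qaddC : commutative qadd.
Proof. by move=> A B; case: (quo_ex A) (quo_ex B) => x -> [y ->]; rewrite !qaddE addrC. Qed.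
Lemma qadd0 : left_id q0 qadd.
Proof. by move=> A; case: (quo_ex A) => x ->; rewrite qaddE add0r. Qed.
Lemma qaddN : left_inverse q0 qopp qadd.
Proof. by move=> A; case: (quo_ex A) => x ->; rewrite qoppE qaddE addNr. Qed.

HB.instance Definition _ := GRing.isZmodule.Build quoT qaddA qaddC qadd0 qaddN.
Lemma qaddE' x y : (cls x + cls y : quoT) = cls (x + y).
Proof. exact: qaddE. Qed.

Lemma qscaleA a b v : qscale a (qscale b v) = qscale (a * b) v.
Proof. by case: (quo_ex v) => x ->; rewrite !qscaleE scalerA. Qed.
Lemma qscale1 : left_id 1 qscale.
Proof. by move=> v; case: (quo_ex v) => x ->; rewrite !qscaleE scale1r. Qed.
Lemma qscaleDr : right_distributive qscale +%R.
Proof.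
move=> a A B; case: (quo_ex A) (quo_ex B) => x -> [y ->].
rewrite (qaddE' x y) !qscaleE (qaddE' (a *: x)) scalerDr //.
Qed.
Lemma qscaleDl v : {morph qscale^~ v: a b / a + b}.
Proof.
move=> a b; case: (quo_ex v) => x ->.
by rewrite !qscaleE (qaddE' (a *: x)) scalerDl.
Qed.

HB.instance Definition _ := GRing.Zmodule_isLmodule.Build R quoT qscaleA qscale1 qscaleDr qscaleDl.

Lemma cls_lin : linear cls.
Proof.
move=> a x y; rewrite -qaddE' -qscaleE; done.
Qed.
HB.instance Definition _ := GRing.isLinear.Build R M quoT _ cls cls_lin.

Lemma cls_ker x : cls x = 0 <-> P x.
Proof. by rewrite -[0]/(cls 0); rewrite clsP subr0. Qed.

Lemma cls_surj A : exists x, cls x = A.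
Proof. by case: (quo_ex A) => x ->; exists x. Qed.
End QuoMod.

Section Span.
Variables (R : comPzRingType).

Definition comb (X : lmodType R) n (v : 'I_n -> X) (l : 'rV[R]_n) : X :=
  \sum_(i < n) l 0 i *: v i.

Definition fspan (X : lmodType R) n (v : 'I_n -> X) (x : X) :=
  exists l : 'rV[R]_n, x = comb v l.

Definition gen (X : lmodType R) (A : X -> Prop) (x : X) :=
  forall Q : X -> Prop, subclosed Q -> (forall y, A y -> Q y) -> Q x.

Variable X : lmodType R.

Lemma comb_lin n (v : 'I_n -> X) a l l' :
  comb v (a *: l + l') = a *: comb v l + comb v l'.
Proof.
rewrite /comb scaler_sumr -big_split /=; apply: eq_bigr => i _.
by rewrite !mxE scalerDl scalerA.
Qed.

Lemma comb0 n (v : 'I_n -> X) : comb v 0 = 0.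
Proof. by rewrite /comb big1 // => i _; rewrite mxE scale0r. Qed.

Lemma combZ n (v : 'I_n -> X) a l : comb v (a *: l) = a *: comb v l.
Proof. by rewrite -[a *: l]addr0 comb_lin comb0 addr0. Qed.

Lemma combD n (v : 'I_n -> X) l l' : comb v (l + l') = comb v l + comb v l'.
Proof. by have := comb_lin v 1 l l'; rewrite !scale1r. Qed.

Lemma combN n (v : 'I_n -> X) l : comb v (- l) = - comb v l.
Proof. by rewrite -[- l]scaleN1r combZ scaleN1r. Qed.

Lemma combB n (v : 'I_n -> X) l l' : comb v (l - l') = comb v l - comb v l'.
Proof. by rewrite combD combN. Qed.

Lemma comb_delta n (v : 'I_n -> X) i : comb v (delta_mx 0 i) = v i.
Proof.
rewrite /comb (bigD1 i) //= big1 ?addr0; first by rewrite mxE !eqxx scale1r.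
by move=> j ji; rewrite mxE eqxx /= (negbTE ji) scale0r.
Qed.

Lemma comb_fD n (v w : 'I_n -> X) l : comb (fun i => v i + w i) l = comb v l + comb w l.
Proof. by rewrite /comb -big_split; apply: eq_bigr => i _; rewrite scalerDr. Qed.

Lemma comb_fZ n (v : 'I_n -> X) a l : comb (fun i => a *: v i) l = a *: comb v l.
Proof. by rewrite /comb scaler_sumr; apply: eq_bigr => i _; rewrite !scalerA mulrC. Qed.

Lemma comb_fN n (v : 'I_n -> X) l : comb (fun i => - v i) l = - comb v l.
Proof. rewrite -scaleN1r -comb_fZ; congr comb; apply: funext => i; by rewrite scaleN1r. Qed.

Lemma comb_fB n (v w : 'I_n -> X) l : comb (fun i => v i - w i) l = comb v l - comb w l.
Proof. by rewrite comb_fD comb_fN. Qed.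

Lemma comb_id n (l : 'rV[R]_n) : comb (fun i => delta_mx 0 i) l = l.
Proof. by rewrite /comb -row_sum_delta. Qed.

Lemma gen_closed (A : X -> Prop) : subclosed (gen A).
Proof.
split; first by move=> Q [Q0 _] _.
move=> a x y gx gy Q hQ hA; case: (hQ) => _ QD; apply: QD; [exact: gx | exact: gy].
Qed.

Lemma gen_in (A : X -> Prop) y : A y -> gen A y.
Proof. by move=> Ay Q _ hA; apply: hA. Qed.

Lemma fspan_closed n (v : 'I_n -> X) : subclosed (fspan v).
Proof.
split; first by exists 0; rewrite comb0.
by move=> a x y [l ->] [l' ->]; exists (a *: l + l'); rewrite comb_lin.
Qed.

Lemma closed_comb (Q : X -> Prop) n (v : 'I_n -> X) l :
  subclosed Q -> (forall i, Q (v i)) -> Q (comb v l).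
Proof.
move=> hQ hv; rewrite /comb; elim/big_ind: _ => //.
- exact: (proj1 hQ).
- by move=> x y qx qy; exact: PD.
- by move=> i _; apply: PZ.
Qed.

Lemma fspan_gen n (v : 'I_n -> X) x : fspan v x <-> gen (fun y => exists i, y = v i) x.
Proof.
split.
  case=> l -> Q hQ hA; apply: closed_comb => // i; apply: hA; by exists i.
move=> g; apply: g; first exact: fspan_closed.
by move=> y [i ->]; exists (delta_mx 0 i); rewrite comb_delta.
Qed.

Lemma span_fspan (g : seq X) x : span_of g x <-> fspan (fun i : 'I_(size g) => g`_i) x.
Proof.
split.
  by case=> c ->; exists (\row_i c i); apply: eq_bigr => i _; rewrite mxE.
by case=> l ->; exists (fun i => l 0 i).
Qed.

Lemma span_gen (g : seq X) x : span_of g x <-> gen (fun y => y \in g) x.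
Proof.
rewrite span_fspan fspan_gen; split=> G Q hQ hA; apply: G => // y.
  by case=> i ->; apply: hA; apply: mem_nth.
move=> yg; apply: hA; have yi : (index y g < size g)%N by rewrite index_mem.
exists (Ordinal yi) => /=; by rewrite nth_index.
Qed.

Lemma gen_le (A B : X -> Prop) x : (forall y, A y -> gen B y) -> gen A x -> gen B x.
Proof.
move=> hAB gA; apply: gA; first exact: gen_closed.
exact: hAB.
Qed.

Lemma span_closed (g : seq X) : subclosed (span_of g).
Proof.
have [h0 h1] := gen_closed (fun y => y \in g); split.
  by apply/span_gen.
by move=> a x y /span_gen gx /span_gen gy; apply/span_gen; apply: h1.
Qed.

Lemma span_mem (g : seq X) y : y \in g -> span_of g y.
Proof. by move=> yg; apply/span_gen; apply: gen_in. Qed.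

Lemma span_le (g g2 : seq X) x :
  (forall y, y \in g -> span_of g2 y) -> span_of g x -> span_of g2 x.
Proof.
move=> hg /span_gen gx; apply: gx; first exact: span_closed. exact: hg.
Qed.

Lemma span_Z (g : seq X) a x : span_of g x -> span_of g (a *: x).
Proof. apply: PZ; exact: span_closed. Qed.

Lemma fspan_span n (v : 'I_n -> X) x : fspan v x <-> span_of [seq v i | i <- enum 'I_n] x.
Proof.
rewrite fspan_gen span_gen; split => G Q hQ hA; apply: G => // y.
  by case=> i ->; apply: hA; apply: map_f; rewrite mem_enum.
by case/mapP => i _ ->; apply: hA; exists i.
Qed.

End Span.

Lemma span_lin (R : comPzRingType) (X Y : lmodType R) (h : {linear X -> Y}) (g : seq X) x :
  span_of g x -> span_of (map h g) (h x).
Proof.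
move=> /span_gen gx.
apply: (gx (fun z => span_of (map h g) (h z))).
    split; first by rewrite linear0; apply: (proj1 (span_closed _)).
    by move=> a y z hy hz; rewrite linearP; apply: (proj2 (span_closed _)).
by move=> y yg; apply: span_mem; apply: map_f.
Qed.

Lemma comb_lin_map (R : comPzRingType) (X Y : lmodType R) (h : {linear X -> Y}) n (v : 'I_n -> X) l :
  h (comb v l) = comb (fun i => h (v i)) l.
Proof. by rewrite /comb linear_sum; apply: eq_bigr => i _; rewrite linearZ. Qed.

HB.instance Definition _ (R : comPzRingType) (X : lmodType R) n (v : 'I_n -> X) :=
  GRing.isLinear.Build R 'rV[R]_n X _ (comb v) (@comb_lin R X n v).

Section Main.
Variable R : comPzRingType.
Implicit Types X F K : lmodType R.

Lemma comb_comb X n m (v : 'I_n -> X) (w : 'I_m -> 'rV[R]_n) l :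
  comb v (comb w l) = comb (fun j => comb v (w j)) l.
Proof. exact: (comb_lin_map (comb v)). Qed.

Definition ufp X n (v : 'I_n -> X) t :=
  exists (F : lmodType R) (psi : {linear F -> X}), fin_presented F /\
    (forall y, psi y = 0 -> t *: y = 0) /\
    (forall x, fspan v x -> exists y, psi y = t *: x) /\
    (forall y, fspan v (psi y)).

Lemma coh_ufp X (s : R) :
  (forall (g : seq X) (K : lmodType R) (j : {linear K -> X}),
      is_submodule_copy j (span_of g) -> uS_fin_presented_wrt K s) ->
  forall n (v : 'I_n -> X), ufp v s.
Proof.
move=> H n v; set g := [seq v i | i <- enum 'I_n].
have hc := span_closed g.
have := H g _ _ (sub_copy hc).
case=> T1 [F [T2 [i [phi [p [fpF [iinj [iex [pex [psurj [k1 k2]]]]]]]]]]].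
exists F, ((@sv _ _ _ hc : {linear submT hc -> X}) \o phi); split => //; split; last split.
- move=> y /= e.
  have: phi y = 0 by apply: sv_inj; rewrite e.
  move/iex => [x <-]; by rewrite -linearZ k1 linear0.
- move=> x /fspan_span px.
  have: p (s *: (SubM x px : submT hc)) = 0 by rewrite linearZ; apply: k2.
  by move/pex => [y ey]; exists y; rewrite /= ey.
- by move=> y /=; apply/fspan_span; exact: sp.
Qed.

Lemma ker_closed F K (phi : {linear F -> K}) : subclosed (fun y => phi y = 0).
Proof.
by split; [rewrite linear0 | move=> a x y hx hy; rewrite linearP hx hy scaler0 addr0].
Qed.

Lemma im_closed F K (phi : {linear F -> K}) : subclosed (fun x => exists y, phi y = x).
Proof.
split; first by exists 0; rewrite linear0.
by move=> a x y [x' <-] [y' <-]; exists (a *: x' + y'); rewrite linearP.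
Qed.

Lemma back K F (phi : {linear F -> K}) s :
  fin_presented F -> (forall y, phi y = 0 -> s *: y = 0) ->
  (forall x, exists y, phi y = s *: x) -> uS_fin_presented_wrt K s.
Proof.
move=> fpF hk hc.
pose h1 := ker_closed phi; pose h2 := im_closed phi.
exists (submT h1), F, (quoT h2), (@sv _ _ _ h1 : {linear submT h1 -> F}), phi, (@cls _ _ _ h2 : {linear K -> quoT h2}).
split => //; split; first exact: sv_inj.
split; first exact: (proj2 (sub_copy h1)).
split; first by move=> m; exact: (iff_sym (cls_ker h2 m)).
split; first exact: cls_surj.
split.
  move=> t; apply: sv_inj; rewrite linearZ linear0; apply: hk; exact: (sp t).
move=> t; case: (cls_surj t) => m <-; rewrite -linearZ; apply/(cls_ker h2); exact: hc.
Qed.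

Lemma fin_presented_of F n (e : 'I_n -> F) (rel : seq 'rV[R]_n) :
  (forall y, fspan e y) -> (forall c, comb e c = 0 <-> span_of rel c) -> fin_presented F.
Proof.
move=> he hr; pose g := [seq e i | i <- enum 'I_n].
have sz : size g = n by rewrite size_map size_enum_ord.
have gi : forall i : 'I_n, g`_i = e i.
  by move=> i; rewrite (nth_map i) ?size_enum_ord // nth_ord_enum.
exists g; split; first by move=> x; apply/fspan_span.
move: (size g) sz => m sz; subst m.
exists rel => c; rewrite -hr /comb.
by rewrite (eq_bigr (fun i => c 0 i *: e i)) // => i _; rewrite gi.
Qed.

Lemma KL X n (v : 'I_n -> X) t : ufp v t ->
  exists L : seq 'rV[R]_n, (forall l, l \in L -> comb v l = 0) /\
    (forall la, comb v la = 0 -> span_of L ((t * t) *: la)).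
Proof.
case=> F [psi [[gF [hgen [rel relP]]] [psker [psim psin]]]].
pose m := size gF; pose e (j : 'I_m) := gF`_j.
have [a ha] : {a : 'I_n -> 'rV[R]_m & forall i, psi (comb e (a i)) = t *: v i}.
  apply: (@boolp.choice _ _ (fun i (a : 'rV[R]_m) => psi (comb e a) = t *: v i)) => i.
  have [y hy] : exists y, psi y = t *: v i.
    by apply: psim; exists (delta_mx 0 i); rewrite comb_delta.
  case: (hgen y) => c hc; exists (\row_j c j).
  rewrite -hy hc /comb; apply: congr1; apply: eq_bigr => j _; by rewrite mxE.
have [d hd] : {d : 'I_m -> 'rV[R]_n & forall j, psi (e j) = comb v (d j)}.
  apply: (@boolp.choice _ _ (fun j (d : 'rV[R]_n) => psi (e j) = comb v d)) => j.
  by case: (psin (e j)) => l hl; exists l.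
have key : forall mu, comb v (comb d mu) = psi (comb e mu).
  move=> mu; rewrite comb_comb comb_lin_map; congr comb; apply: funext => j.
  by rewrite hd.
pose w i := t *: delta_mx 0 i - comb d (a i).
exists ([seq w i | i <- enum 'I_n] ++ [seq comb d r | r <- rel]); split.
  move=> l; rewrite mem_cat => /orP [] /mapP [x xin ->].
    by rewrite /w combB combZ comb_delta key ha subrr.
  rewrite key; have: comb e x = 0 by apply/relP; apply: span_mem.
  by move=> ->; rewrite linear0.
move=> la hla; pose mu := comb a la.
have h1 : psi (comb e mu) = 0.
  rewrite /mu comb_comb comb_lin_map.
  rewrite (_ : (fun i => psi (comb e (a i))) = (fun i => t *: v i)); last first.
    by apply: funext => i; rewrite ha.
  by rewrite comb_fZ hla scaler0.
have h2 : span_of rel (t *: mu) by apply/relP; change (comb e (t *: mu) = 0); rewrite combZ; apply: psker.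
have h3 : comb w la = t *: la - comb d mu.
  by rewrite /w comb_fB comb_fZ comb_id /mu comb_comb.
have -> : (t * t) *: la = t *: comb w la + comb d (t *: mu).
  by rewrite h3 combZ scalerBr subrK scalerA.
apply: PD; first exact: span_closed.
  apply: span_Z; apply: closed_comb; first exact: span_closed.
  by move=> i; apply: span_mem; rewrite mem_cat map_f ?mem_enum.
apply: (span_le (g := [seq comb d r | r <- rel])).
  by move=> y yin; apply: span_mem; rewrite mem_cat yin orbT.
exact: (span_lin (comb d) h2).
Qed.

End Main.

Section Final.
Variable R : comPzRingType.
Implicit Types X F K : lmodType R.

Lemma mkLin (U V : lmodType R) (f : U -> V) : linear f ->
  exists g : {linear U -> V}, forall x, g x = f x.
Proof.
move=> hf; exists (HB.pack_for {linear U -> V} f (GRing.isLinear.Build R U V _ f hf)).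
by [].
Qed.

Lemma lift_seq (A : Type) (B : eqType) (j : A -> B) (L : seq B) :
  (forall y, y \in L -> exists k, j k = y) -> exists L', map j L' = L.
Proof.
elim: L => [|y L IH] H; first by exists [::].
case: (H y (mem_head _ _)) => k hk.
case: IH => [z zL|L' hL']; first by apply: H; rewrite in_cons zL orbT.
by exists (k :: L'); rewrite /= hk hL'.
Qed.

Lemma span_map_inv K X (j : {linear K -> X}) (g : seq K) m :
  span_of (map j g) m -> exists x, j x = m /\ span_of g x.
Proof.
move/span_gen => G.
apply: (G (fun m => exists x, j x = m /\ span_of g x)).
  split; first by exists 0; split; [rewrite linear0 | apply: (proj1 (span_closed g))].
  move=> a x y [x' [<- hx]] [y' [<- hy]]; exists (a *: x' + y'); split.
    by rewrite linearP.
  by apply: (proj2 (span_closed g)).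
move=> y /mapP [x xg ->]; exists x; split => //; exact: span_mem.
Qed.

Lemma S_finite_mono X s a : S_finite_wrt X s -> S_finite_wrt X (s * a).
Proof. by case=> g hg; exists g => x; rewrite -scalerA. Qed.

Lemma ufp_mono X s a : uS_fin_presented_wrt X s -> uS_fin_presented_wrt X (a * s).
Proof.
case=> T1 [F [T2 [i [phi [p [h1 [h2 [h3 [h4 [h5 [h6 h7]]]]]]]]]]].
exists T1, F, T2, i, phi, p; do 5 split => //.
by split => t; rewrite -scalerA ?h6 ?h7 scaler0.
Qed.

Lemma fg_transfer K X (j : {linear K -> X}) s : injective j ->
  (forall (g : seq X) (K' : lmodType R) (j' : {linear K' -> X}),
      is_submodule_copy j' (span_of g) -> uS_fin_presented_wrt K' s) ->
  (forall (g : seq K) (K' : lmodType R) (j' : {linear K' -> K}),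
      is_submodule_copy j' (span_of g) -> uS_fin_presented_wrt K' s).
Proof.
move=> jinj H g K' j' [inj' img']; apply: (H (map j g) K' (j \o j')); split.
  by move=> x y /= e; apply: inj'; apply: jinj.
move=> m; split.
  by case=> k <- /=; apply: span_lin; apply/img'; exists k.
case/span_map_inv => x [<- /img' [k <-]]; by exists k.
Qed.

Lemma comb_nth X (g : seq X) x : span_of g x -> fspan (fun i : 'I_(size g) => g`_i) x.
Proof. by move/span_fspan. Qed.

End Final.

Definition jinv (R : comPzRingType) (K X : lmodType R) (j : K -> X) (z : X) : K :=
  match pselect (exists k, j k = z) with
  | left e => projT1 (cid e)
  | right _ => 0
  end.

Lemma jinvK (R : comPzRingType) (K X : lmodType R) (j : K -> X) z :
  (exists k, j k = z) -> j (jinv j z) = z.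
Proof.
rewrite /jinv; case: pselect => // e _; by case: (cid e).
Qed.

Unset Implicit Arguments.

Theorem corollary3p3 (R : comPzRingType) (S : {pred R})
    (M N : lmodType R) (f : {linear M -> N}) :
  multiplicative_subset S ->
  uS_coherent S M -> uS_coherent S N ->
  (forall (K : lmodType R) (j : {linear K -> M}),
      is_submodule_copy j (fun m => f m = 0) -> uS_coherent S K) /\
  (forall (I : lmodType R) (j : {linear I -> N}),
      is_submodule_copy j (fun n => exists m, f m = n) -> uS_coherent S I) /\
  (forall (C : lmodType R) (q : {linear N -> C}),
      (forall c : C, exists n, q n = c) ->
      (forall n : N, q n = 0 <-> exists m, f m = n) ->
      uS_coherent S C).
Proof.
move=> [S1 SM] [sM sMS [[gM hgM] cohM]] [sN sNS [[gN hgN] cohN]].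
have sNN : sN * sN \in S by apply: (SM).
split; [|split].
-
  move=> K j [jinj jimg].
  exists ((sN * sN * sM) * sM); first by apply: (SM) => //; apply: (SM).
  split; last first.
    by move=> g K' j' hc; apply: ufp_mono; exact: (fg_transfer jinj cohM hc).
  apply: S_finite_mono.
  have [L [hL1 hL2]] := KL (coh_ufp cohN (fun i : 'I_(size gM) => f gM`_i)).
  have [L' hL'] : exists L', map j L' = [seq comb (fun i : 'I_(size gM) => gM`_i) l | l <- L].
    apply: lift_seq => y /mapP [l lL ->]; apply/jimg.
    by rewrite comb_lin_map; exact: hL1.
  exists L' => x.
  have fx : f (j x) = 0 by apply/jimg; exists x.
  case: (comb_nth (hgM (j x))) => la hla.
  have e : comb (fun i : 'I_(size gM) => f gM`_i) la = 0.
    by rewrite -(comb_lin_map f) -hla linearZZ fx scaler0.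
  have := span_lin (comb (fun i : 'I_(size gM) => gM`_i)) (hL2 la e).
  rewrite -hL' linearZZ /= -hla => /span_map_inv [x' [ex' hx']].
  suff -> : (sN * sN * sM) *: x = x' by [].
  by apply: jinj; rewrite ex' linearZZ scalerA.
-
  move=> I j [jinj jimg].
  exists (sM * sN); first by apply: (SM).
  split; last first.
    by move=> g K' j' hc; apply: ufp_mono; exact: (fg_transfer jinj cohN hc).
  apply: S_finite_mono.
  have [L' hL'] : exists L', map j L' = map f gM.
    by apply: lift_seq => y /mapP [m _ ->]; apply/jimg; exists m.
  exists L' => x.
  have [m fm] : exists m, f m = j x by apply/jimg; exists x.
  have := span_lin f (hgM m); rewrite -hL' linearZZ fm -linearZZ.
  by case/span_map_inv => x' [/jinj -> hx'].
-
  move=> C q qsurj qker.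
  exists (sN * ((sN * sN) * sM)); first by apply: (SM) => //; apply: (SM).
  split.
    apply: S_finite_mono; exists (map q gN) => x.
    by case: (qsurj x) => n <-; rewrite -linearZZ; exact: span_lin.
  move=> g K jK [jKinj jKimg].
  have [nl hnl] : {nl : 'I_(size g) -> N & forall i, q (nl i) = g`_i}.
    by apply: (@boolp.choice _ _ (fun (i : 'I_(size g)) (n : N) => q n = g`_i)) => i; exact: qsurj.
  pose vv := fun i : 'I_(size g + size gM) =>
    match split i with inl a => nl a | inr b => - f gM`_b end.
  have csplit : forall l', comb vv l' =
      comb nl (lsubmx l') - f (comb (fun b : 'I_(size gM) => gM`_b) (rsubmx l')).
    move=> l'; rewrite /comb big_split_ord /= linear_sum -sumrN; congr (_ + _).
      apply: eq_bigr => i _; rewrite mxE /vv.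
      by rewrite (unsplitK (inl _ i) : split (lshift (size gM) i) = inl i).
    apply: eq_bigr => i _; rewrite mxE /vv linearZZ.
    by rewrite (unsplitK (inr _ i) : split (rshift (size g) i) = inr i) scalerN.
  have [L' [hL1 hL2]] := KL (coh_ufp cohN vv).
  pose L0 := map lsubmx L'.
  have hcomb : forall l, comb (fun i : 'I_(size g) => g`_i) l = q (comb nl l).
    by move=> l; rewrite comb_lin_map; congr comb; apply: funext => i; rewrite hnl.
  have hA : forall l, l \in L0 -> comb (fun i : 'I_(size g) => g`_i) l = 0.
    move=> l /mapP [l' l'in ->]; have := hL1 l' l'in; rewrite csplit.
    move/eqP; rewrite subr_eq0 => /eqP e.
    by rewrite hcomb e; apply/qker; eexists.
  have hB : forall la, comb (fun i : 'I_(size g) => g`_i) la = 0 ->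
      span_of L0 (((sN * sN) * sM) *: la).
    move=> la; rewrite hcomb => /qker [m fm].
    case: (comb_nth (hgM m)) => mu hmu.
    have e : comb vv (row_mx (sM *: la) mu) = 0.
      by rewrite csplit (row_mxKl (sM *: la) mu) (row_mxKr (sM *: la) mu) combZ -fm -linearZZ hmu subrr.
    have := span_lin lsubmx (hL2 _ e).
    by rewrite linearZZ /= row_mxKl scalerA.
  have hc0 := span_closed L0.
  have inimg : forall l, exists k, jK k = comb (fun i : 'I_(size g) => g`_i) l.
    by move=> l; apply/jKimg; apply/span_fspan; exists l.
  have [phi0 hphi0] : exists phi0 : {linear 'rV[R]_(size g) -> K},
      forall l, phi0 l = jinv jK (comb (fun i : 'I_(size g) => g`_i) l).
    apply: mkLin => a x y; apply: jKinj.
    by rewrite [RHS]linearPZ /= !jinvK // comb_lin.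
  have jphi0 : forall l, jK (phi0 l) = comb (fun i : 'I_(size g) => g`_i) l.
    by move=> l; rewrite hphi0 jinvK.
  have phi0L : forall l, span_of L0 l -> phi0 l = 0.
    move=> l /span_gen G; apply: (G (fun l => phi0 l = 0)).
      exact: ker_closed.
    by move=> y /hA e; apply: jKinj; rewrite jphi0 e linear0.
  have [phi hphi] : exists phi : {linear quoT hc0 -> K},
      forall A, phi A = phi0 (rep A).
    apply: mkLin => a A B.
    case: (quo_ex A) (quo_ex B) => x -> [y ->].
    have E : forall z, phi0 (rep (cls hc0 z)) = phi0 z.
      move=> z; apply/eqP; rewrite -subr_eq0 -linearB; apply/eqP.
      by apply: phi0L; exact: rep_cls.
    by rewrite -linearPZ !E linearPZ.
  have phicls : forall x, phi (cls hc0 x) = phi0 x.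
    move=> x; rewrite hphi; apply/eqP; rewrite -subr_eq0 -linearB; apply/eqP.
    by apply: phi0L; exact: rep_cls.
  apply: (@ufp_mono R K ((sN * sN) * sM) sN). apply: (@back R K _ phi).
  - apply: (fin_presented_of (e := fun i => cls hc0 (delta_mx 0 i)) (rel := L0)).
      move=> y; case: (cls_surj y) => l <-; exists l.
      by rewrite -(comb_lin_map (cls hc0)) comb_id.
    move=> c0; rewrite -(comb_lin_map (cls hc0)) comb_id; exact: cls_ker.
  - move=> y; case: (cls_surj y) => l <-; rewrite phicls => e.
    have : comb (fun i : 'I_(size g) => g`_i) l = 0 by rewrite -jphi0 e linear0.
    by move/hB => h; rewrite -linearZZ; apply/cls_ker.
  - move=> x; have : span_of g (jK x) by apply/jKimg; exists x.
    case/span_fspan => la hla.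
    exists (((sN * sN) * sM) *: cls hc0 la); rewrite linearZZ phicls.
    congr (_ *: _); apply: jKinj; by rewrite jphi0 hla.
Qed.
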